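(* Let $n\ge3$ and $L>1$, and define $$\sigma_{0,2}=\frac{(n-2)(1+L^{n-1})}{L^{n-1}-L},\qquad \sigma_{2,1}=\frac{L^{n+2}(2+Ln)+(n+2L)-\sqrt{\left(L^{n+2}(2+Ln)+(n+2L)\right)^2-8Ln(L^{n+2}-1)^2}}{2L(L^{n+2}-1)}.$$ Then $\sigma_{2,1}\le\sigma_{0,2}$. *)

(* Defs.v *)
From Stdlib Require Import Reals.
Open Scope R_scope.

Definition sigma02 (n : nat) (L : R) : R :=
  (INR n - 2) * (1 + L ^ (n - 1)) / (L ^ (n - 1) - L).

Definition sigA (n : nat) (L : R) : R :=
  L ^ (n + 2) * (2 + L * INR n) + (INR n + 2 * L).

Definition sigma21 (n : nat) (L : R) : R :=
  (sigA n L - sqrt (sigA n L ^ 2 - 8 * L * INR n * (L ^ (n + 2) - 1) ^ 2))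
  / (2 * L * (L ^ (n + 2) - 1)).

(* Main.v *)
Require Import Defs.
From Stdlib Require Import Reals.
From Stdlib Require Import Lra Psatz Lia.
Open Scope R_scope.

Lemma kg (L n t:R): 1<L -> 5<=n -> 1<=t ->
 4*n*(L^4*t-1)*(L*t-L) <= (n-2)*(1+L*t)*(L^4*t*(2+L*n)+n+2*L).
Proof. intros HL Hn Ht.
 assert (Ha: 0 <= (n-2)*(2+L*n) - 4*n). { assert (0 <= (L-1)*(n*(n-2))) by (apply Rmult_le_pos; nra). nra. }
 assert (Hb: 0 <= (n-2)*(L^4*(2+L*n) + L*(n+2*L)) + 4*n*L*(L^4+1)).
 { assert (0 < L^4) by (apply pow_lt; lra).
   assert (0 < L^4*(2+L*n)) by (apply Rmult_lt_0_compat; nra).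
   assert (0 < (n-2)*(L^4*(2+L*n) + L*(n+2*L))) by (apply Rmult_lt_0_compat; nra).
   assert (0 < 4*n*L*(L^4+1)) by (repeat apply Rmult_lt_0_compat; lra). lra. }
 assert (Hf1: 0 <= (n-2)*(1+L)*(L^4*(2+L*n)+n+2*L)).
 { assert (0 < L^4) by (apply pow_lt; lra). apply Rmult_le_pos; [nra|].
   assert (0 < L^4*(2+L*n)) by (apply Rmult_lt_0_compat; nra). lra. }
 assert (E: (n-2)*(1+L*t)*(L^4*t*(2+L*n)+n+2*L) - 4*n*(L^4*t-1)*(L*t-L)
   = L^5*((n-2)*(2+L*n) - 4*n)*(t*t-1) + ((n-2)*(L^4*(2+L*n) + L*(n+2*L)) + 4*n*L*(L^4+1))*(t-1)
     + (n-2)*(1+L)*(L^4*(2+L*n)+n+2*L)) by ring.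
 assert (0 < L^5) by (apply pow_lt; lra).
 assert (0 <= t*t-1) by nra.
 assert (0 <= L^5*((n-2)*(2+L*n) - 4*n)*(t*t-1)) by (apply Rmult_le_pos; [apply Rmult_le_pos|]; lra).
 nra. Qed.

Lemma k3 (L:R): 1<L -> let n:=3 in let t:=L in
 4*n*(L^4*t-1)*(L*t-L) <= (n-2)*(1+L*t)*(L^4*t*(2+L*n)+n+2*L).
Proof. intros H; simpl. set (x:=L-1). replace L with (1+x) by (unfold x; ring).
 assert (0<x) by (unfold x; lra). nra. Qed.

Lemma k4 (L:R): 1<L -> let n:=4 in let t:=L*L in
 4*n*(L^4*t-1)*(L*t-L) <= (n-2)*(1+L*t)*(L^4*t*(2+L*n)+n+2*L).
Proof. intros H; simpl. set (x:=L-1). replace L with (1+x) by (unfold x; ring).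
 assert (0<x) by (unfold x; lra). nra. Qed.

Lemma key (n:nat) (L:R) : (3 <= n)%nat -> 1 < L ->
 4*INR n*(L^4*L^(n-2)-1)*(L*L^(n-2)-L) <=
 (INR n-2)*(1+L*L^(n-2))*(L^4*L^(n-2)*(2+L*INR n)+INR n+2*L).
Proof. intros hn hL.
 destruct (Nat.eq_dec n 3) as [->|h3].
 { simpl (3-2)%nat. replace (INR 3) with 3 by (simpl; ring).
   replace (L^1) with L by ring. exact (k3 L hL). }
 destruct (Nat.eq_dec n 4) as [->|h4].
 { simpl (4-2)%nat. replace (INR 4) with 4 by (simpl; ring).
   replace (L^2) with (L*L) by ring. exact (k4 L hL). }
 apply kg; auto.
 - replace 5 with (INR 5) by (simpl; ring). apply le_INR. lia.
 - apply pow_R1_Rle. lra.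
Qed.

Theorem lemma2p4 (n : nat) (L : R) (hn : (3 <= n)%nat) (hL : 1 < L) :
  sigma21 n L <= sigma02 n L.
Proof.
  unfold sigma21, sigma02.
  fold (sigA n L).
  set (t := L^(n-2)).
  assert (HP: L^(n+2) = L^4*t).
  { unfold t. rewrite <- pow_add. f_equal. lia. }
  assert (Hu: L^(n-1) = L*t).
  { unfold t. rewrite <- (pow_1 L) at 2. rewrite <- pow_add. f_equal; lia. }
  assert (Ht: 1 <= t) by (apply pow_R1_Rle; lra).
  assert (Hn3: 3 <= INR n) by (replace 3 with (INR 3) by (simpl; ring); apply le_INR; lia).
  pose proof (key n L hn hL) as K. fold t in K.
  unfold sigA in *. rewrite HP, Hu in *.
  set (P := L^4*t) in *.
  set (A := P*(2+L*INR n)+(INR n+2*L)) in *.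
  assert (HL4: 1 <= L^4) by (apply pow_R1_Rle; lra).
  assert (HP1: 1 < P).
  { unfold P. assert (1 < L*L) by nra. assert (1 < L^4). { replace (L^4) with (L*L*(L*L)) by ring. nra. } nra. }
  assert (HA: P*(2+L*INR n) <= A) by (unfold A; lra). assert (HPp: 0 < P*(2+L*INR n)) by (apply Rmult_lt_0_compat; nra).
  assert (HA0: 0 < A) by lra.
  assert (Hd: 8*L*INR n*(P-1)^2 <= A^2).
  { assert (8*L*INR n <= (2+L*INR n)^2).
    { pose proof (pow2_ge_0 (2-L*INR n)). nra. }
    assert (0 <= (P-1)^2 <= P^2) by (split; [apply pow2_ge_0| nra]).
    assert (8*L*INR n*(P-1)^2 <= (2+L*INR n)^2 * P^2).
    { apply Rle_trans with ((2+L*INR n)^2*(P-1)^2).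
      - apply Rmult_le_compat_r; nra.
      - apply Rmult_le_compat_l; nra. }
    assert ((P*(2+L*INR n))^2 <= A^2).
    { simpl. rewrite !Rmult_1_r. apply Rmult_le_compat; lra. }
    nra. }
  set (S := sqrt (A^2 - 8*L*INR n*(P-1)^2)).
  assert (HS0: 0 <= S) by apply sqrt_pos.
  assert (HS2: S*S = A^2 - 8*L*INR n*(P-1)^2) by (apply sqrt_sqrt; lra).
  assert (HSA: S <= A).
  { destruct (Rle_lt_dec S A) as [h|h]; [exact h|].
    assert (A*A < S*S) by (apply Rmult_le_0_lt_compat; lra).
    assert (0 <= 8*L*INR n*(P-1)^2) by (pose proof (pow2_ge_0 (P-1)); apply Rmult_le_pos; nra).
    replace (A^2) with (A*A) in HS2 by ring. lra. }
  assert (HD: 0 < 2*L*(P-1)) by nra.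
  assert (Ht1: 1 < t) by (unfold t; apply Rlt_pow_R1; [lra|lia]).
  assert (Hul: 0 < L*t - L).
  { replace (L*t-L) with (L*(t-1)) by ring. apply Rmult_lt_0_compat; lra. }
  apply Rle_trans with (4*INR n*(P-1)/A).
  - apply (Rmult_le_reg_r (2*L*(P-1)*A)). apply Rmult_lt_0_compat; lra.
    unfold Rdiv. replace ((A - S) * / (2 * L * (P - 1)) * (2 * L * (P - 1) * A))
      with ((A-S)*A) by (field; lra).
    replace (4 * INR n * (P - 1) * / A * (2 * L * (P - 1) * A))
      with (8*L*INR n*(P-1)^2) by (field; lra).
    nra.
  - apply (Rmult_le_reg_r (A*(L*t-L))). apply Rmult_lt_0_compat; lra.
    unfold Rdiv. replace (4 * INR n * (P - 1) * / A * (A * (L * t - L)))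
      with (4*INR n*(P-1)*(L*t-L)) by (field; lra).
    replace ((INR n - 2) * (1 + L * t) * / (L * t - L) * (A * (L * t - L)))
      with ((INR n - 2) * (1 + L * t) * A) by (field; lra).
    unfold A. lra.
Qed.
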